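(* Let $k,n\ge1$ and $f:\{0,1,\dots,k\}^3\to\mathbb C$ arbitrary. For any triple $(\mathbf z^{[1]},\mathbf z^{[0]},\mathbf z^{[-1]})$ of $n$-bit strings with configuration basis numbers $\mathbf n=(n_s)_{s\in\{0,1\}^3}$, $$\mathbf E_\sigma f\Big(\sum_{(l,\nu)\in\sigma}z^{[1]}_l\oplus\nu,\ \sum_{(l,\nu)\in\sigma}z^{[0]}_l\oplus\nu,\ \sum_{(l,\nu)\in\sigma}z^{[-1]}_l\oplus\nu\Big)=2^{-k}\sum_{\mathbf k\in\mathcal P(k)}\binom{k}{\mathbf k}\Big(\prod_{s\in\{0,1\}^3}\Big(\frac{n_s+n_{\bar s}}{n}\Big)^{k_s}\Big)f\Big(\Big(\sum_{s\in\{0,1\}^3:\ s^{[t]}=1}k_s\Big)_{t\in\{1,0,-1\}}\Big).$$ In particular the average is a polynomial in $\mathbf n$.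
   Context: A random clause is $\sigma=((l_0,\nu_0),\dots,(l_{k-1},\nu_{k-1}))$ with each $l_q$ independent uniform in $\{0,\dots,n-1\}$ (repetitions allowed) and each $\nu_q$ independent uniform in $\{0,1\}$; sums over $(l,\nu)\in\sigma$ run over the $k$ pairs with multiplicity, and $\mathbf E_\sigma$ is expectation over $\sigma$. Configuration basis numbers: $n_s=|\{j:(z^{[1]}_j,z^{[0]}_j,z^{[-1]}_j)=s\}|$ for $s=s^{[1]}s^{[0]}s^{[-1]}\in\{0,1\}^3$; $\bar s$ is the bitwise complement. $\mathcal P(k)$ is the set of families $(k_s)_{s\in\{0,1\}^3}$ of nonnegative integers summing to $k$, and $\binom{k}{\mathbf k}=k!/\prod_s k_s!$. *)

(* Defs.v *)
From HB Require Import structures.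
From mathcomp Require Import all_boot all_order all_algebra.
From mathcomp Require Import complex.
From mathcomp Require Import reals.
Set Implicit Arguments. Unset Strict Implicit. Unset Printing Implicit Defensive.
Import Order.TTheory GRing.Theory Num.Theory.
Local Open Scope ring_scope.

(* A configuration s = s^[1] s^[0] s^[-1] in {0,1}^3 is encoded as
   ((s^[1], s^[0]), s^[-1]) : bool * bool * bool. *)
Definition cfg := (bool * bool * bool)%type.
Definition cfg1 (s : cfg) : bool := s.1.1.
Definition cfg0 (s : cfg) : bool := s.1.2.
Definition cfgm1 (s : cfg) : bool := s.2.
Definition cfgC (s : cfg) : cfg := ((~~ s.1.1, ~~ s.1.2), ~~ s.2).

Definition basis_num (n : nat) (z1 z0 zm1 : 'I_n -> bool) (s : cfg) : nat :=
  #|[set j : 'I_n | ((z1 j, z0 j), zm1 j) == s]|.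

Definition clause (n k : nat) := {ffun 'I_k -> 'I_n * bool}.

Definition clause_sum (n k : nat) (z : 'I_n -> bool) (sigma : clause n k) : nat :=
  (\sum_(q < k) (z (sigma q).1 (+) (sigma q).2 : nat))%N.

Definition clause_exp (C : fieldType) (n k : nat) (F : clause n k -> C) : C :=
  ((n * 2) ^ k)%N%:R^-1 * \sum_(sigma : clause n k) F sigma.

(* Main.v *)
Require Import Defs.
From HB Require Import structures.
From mathcomp Require Import all_boot all_order all_algebra.
From mathcomp Require Import complex reals.
From mathcomp Require Import zify ring.
Set Implicit Arguments. Unset Strict Implicit. Unset Printing Implicit Defensive.
Import Order.TTheory GRing.Theory Num.Theory.

Definition cntc (T : finType) (c : T -> cfg) k (g : {ffun 'I_k -> T}) (s : cfg) : nat :=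
  (\sum_(q < k) (c (g q) == s))%N.
Definition Bc (T : finType) (c : T -> cfg) k (m : cfg -> nat) : nat :=
  (\sum_(g : {ffun 'I_k -> T}) [forall s, cntc c g s == m s])%N.
Definition Nc (T : finType) (c : T -> cfg) (s : cfg) : nat := #|[set t : T | c t == s]|.
Definition decm (m : cfg -> nat) (u : cfg) : cfg -> nat := fun s => (m s - (u == s))%N.
Definition consf (T : finType) k (t : T) (g : {ffun 'I_k -> T}) : {ffun 'I_k.+1 -> T} :=
  [ffun i => if unlift ord0 i is Some j then g j else t].

Lemma sum_ffunS (T : finType) k (F : {ffun 'I_k.+1 -> T} -> nat) :
  (\sum_(g : {ffun 'I_k.+1 -> T}) F g =
   \sum_(t : T) \sum_(g : {ffun 'I_k -> T}) F (consf t g))%N.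
Proof.
rewrite pair_big /=.
rewrite (reindex (fun p : T * {ffun 'I_k -> T} => consf p.1 p.2)) //.
apply: onW_bij.
exists (fun g : {ffun 'I_k.+1 -> T} => (g ord0, [ffun j => g (lift ord0 j)])).
  case=> t g /=; congr pair; first by rewrite /consf ffunE unlift_none.
  by apply/ffunP => j; rewrite !ffunE liftK.
move=> g; apply/ffunP => i; rewrite /consf ffunE /=.
by case: (unliftP ord0 i) => [j ->|->]; rewrite ?ffunE.
Qed.

Lemma cntc_cons (T : finType) (c : T -> cfg) k t (g : {ffun 'I_k -> T}) s :
  cntc c (consf t g) s = ((c t == s) + cntc c g s)%N.
Proof.
rewrite /cntc big_ord_recl /consf ffunE unlift_none; congr addn.
by apply: eq_bigr => j _; rewrite ffunE liftK.
Qed.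

Lemma eq_shift (a : bool) x y : (a ==> (0 < y))%N -> ((a + x == y) = (x == y - a))%N.
Proof. by case: a => /= H; apply/eqP/eqP; lia. Qed.

Lemma Bc_rec (T : finType) (c : T -> cfg) k m :
  Bc c k.+1 m = (\sum_(t : T) (0 < m (c t)) * Bc c k (decm m (c t)))%N.
Proof.
rewrite /Bc sum_ffunS; apply: eq_bigr => t _.
rewrite big_distrr /=; apply: eq_bigr => g _.
case: (posnP (m (c t))) => [m0|mpos].
  rewrite mul0n; apply/eqP; rewrite eqb0; apply/forallP => H.
  by have := eqP (H (c t)); rewrite cntc_cons eqxx m0 add1n.
rewrite mul1n; congr nat_of_bool; apply: eq_forallb => s.
rewrite cntc_cons eq_shift //; apply/implyP => /eqP <-; done.
Qed.

Lemma decm_other m u s : u != s -> decm m u s = m s.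
Proof. by rewrite /decm => /negbTE ->; rewrite subn0. Qed.

Lemma prod_decm (h : nat -> nat) (m : cfg -> nat) u :
  (\prod_s h (m s) = h (m u) * \prod_(s | s != u) h (decm m u s))%N.
Proof.
rewrite (bigD1 u) //=; congr muln; apply: eq_bigr => s su.
by rewrite decm_other // eq_sym.
Qed.

Lemma sum_decm (m : cfg -> nat) u : (0 < m u)%N ->
  (\sum_s decm m u s).+1 = (\sum_s m s)%N.
Proof.
move=> mpos; rewrite (bigD1 u) //= [in RHS](bigD1 u) //= /decm eqxx.
rewrite -addSn subn1 prednK //; congr addn; apply: eq_bigr => s su.
by rewrite -/(decm m u s) decm_other // eq_sym.
Qed.

Lemma sum_by_c (T : finType) (c : T -> cfg) (F : cfg -> nat) :
  (\sum_(t : T) F (c t) = \sum_s Nc c s * F s)%N.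
Proof.
rewrite (partition_big c xpredT) //=; apply: eq_bigr => s _.
rewrite (eq_bigr (fun _ => F s)); last by move=> t /eqP ->.
rewrite sum_nat_const /Nc; congr muln; apply: eq_card => t.
by rewrite inE.
Qed.

Lemma Bc_mult (T : finType) (c : T -> cfg) k : forall m : cfg -> nat,
  (\sum_s m s)%N = k ->
  (Bc c k m * \prod_s (m s)`! = k`! * \prod_s (Nc c s) ^ (m s))%N.
Proof.
elim: k => [|k IH] m Hm.
  have m0 : forall s, m s = 0%N.
    move=> s; apply/eqP; move/eqP: Hm; rewrite sum_nat_eq0 => /forallP H.
    exact: (implyP (H s)).
  rewrite !big1 //; last by move=> s _; rewrite m0.
    2: by move=> s _; rewrite m0.
  rewrite /Bc (eq_bigr (fun _ => 1%N)); last first.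
    move=> g _; rewrite (_ : [forall s, _] = true) //.
    by apply/forallP => s; rewrite m0 /cntc big_ord0.
  by rewrite sum1_card card_ffun card_ord expn0.
rewrite Bc_rec big_distrl /=.
rewrite (eq_bigr (fun t => m (c t) * (k`! * \prod_s Nc c s ^ decm m (c t) s)))%N; last first.
  move=> t _; case: (posnP (m (c t))) => [->|mpos]; first by rewrite !mul0n.
  rewrite mul1n (prod_decm factorial m (c t)) .
  rewrite -(IH (decm m (c t))); last by apply/eq_add_S; rewrite sum_decm // Hm.
  rewrite (bigD1 (c t) (P := xpredT)) //= /decm eqxx subn1.
  rewrite -[X in X`!](prednK mpos) factS.
  rewrite -/(decm m (c t)).
  set A := (\prod_(s | s != c t) _)%N. set B := Bc _ _ _.
  by rewrite (prednK mpos) -mulnA mulnCA.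
rewrite (sum_by_c c (fun u => m u * (k`! * \prod_s Nc c s ^ decm m u s)))%N.
rewrite (eq_bigr (fun s => m s * (k`! * \prod_s Nc c s ^ m s)))%N; last first.
  move=> u _; case: (posnP (m u)) => [->|mpos]; first by rewrite muln0 mul0n.
  rewrite (bigD1 u) //= [in RHS](bigD1 u) //= /decm eqxx subn1.
  rewrite (eq_bigr (fun s => Nc c s ^ m s)%N); last first.
    by move=> s su; rewrite -/(decm m u s) decm_other // eq_sym.
  rewrite -[in RHS](prednK mpos) expnS.
  set P := (\prod_(s | _) _)%N; set x := (Nc c u ^ _)%N.
  rewrite (prednK mpos); ring.
by rewrite -big_distrl /= Hm factS mulnA.
Qed.

Lemma sum_pred_eq (P : pred cfg) (x : cfg) : (\sum_(s | P s) (x == s) = P x)%N.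
Proof.
rewrite big_mkcond (bigD1 x) //= eqxx big1 ?addn0; first by case: (P x).
by move=> s sx; rewrite eq_sym (negbTE sx); case: (P s).
Qed.

Lemma cnt_sum (T : finType) (c : T -> cfg) k (g : {ffun 'I_k -> T}) :
  (\sum_s cntc c g s = k)%N.
Proof.
rewrite /cntc exchange_big /= (eq_bigr (fun _ => 1%N)).
  by rewrite sum1_card card_ord.
by move=> q _; rewrite (sum_pred_eq xpredT).
Qed.

Lemma cnt_le (T : finType) (c : T -> cfg) k (g : {ffun 'I_k -> T}) s :
  (cntc c g s <= k)%N.
Proof.
rewrite -{2}(cnt_sum c g) (bigD1 s) //=; exact: leq_addr.
Qed.

Lemma cnt_pred (T : finType) (c : T -> cfg) k (g : {ffun 'I_k -> T}) (P : pred cfg) :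
  (\sum_(q < k) (P (c (g q)) : nat) = \sum_(s | P s) cntc c g s)%N.
Proof.
rewrite /cntc exchange_big /=; apply: eq_bigr => q _.
by rewrite sum_pred_eq.
Qed.

Local Open Scope ring_scope.

Lemma group_sum (C : pzSemiRingType) (T : finType) (c : T -> cfg) k
   (G : (cfg -> nat) -> C) (HG : forall m1 m2, m1 =1 m2 -> G m1 = G m2) :
  \sum_(g : {ffun 'I_k -> T}) G (fun s => cntc c g s) =
  \sum_(kk : {ffun cfg -> 'I_k.+1} | (\sum_(s : cfg) kk s)%N == k)
     (Bc c k (fun s => kk s))%:R * G (fun s => kk s).
Proof.
rewrite /Bc.
rewrite (eq_bigr (fun kk : {ffun cfg -> 'I_k.+1} => \sum_(g : {ffun 'I_k -> T})
   ([forall s, cntc c g s == kk s] : nat)%:R * G (fun s => kk s))); last first.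
  by move=> kk _; rewrite natr_sum big_distrl.
rewrite exchange_big /=; apply: eq_bigr => g _.
pose kk0 : {ffun cfg -> 'I_k.+1} := [ffun s => inord (cntc c g s)].
have kk0E s : (kk0 s : nat) = cntc c g s by rewrite ffunE inordK // ltnS cnt_le.
rewrite (bigD1 kk0) /=; last first.
  by apply/eqP; rewrite (eq_bigr (fun s => cntc c g s)) ?cnt_sum // => s _; exact: kk0E.
rewrite (_ : [forall s, _] = true); last by apply/forallP => s; rewrite kk0E.
rewrite mul1r big1 ?addr0; first by apply: HG => s; rewrite kk0E.
move=> kk /andP [_ neq]; rewrite (_ : [forall s, _] = false) ?mul0r //.
apply/negbTE/negP => /forallP H; move/negP: neq; apply; apply/eqP.
apply/ffunP => s; apply/val_inj => /=; rewrite kk0E; exact/esym/eqP/H.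
Qed.

Lemma card_sum (T : finType) (P : pred T) : #|[set x | P x]| = (\sum_x (P x : nat))%N.
Proof.
rewrite -sum1_card big_mkcond /=; apply: eq_bigr => x _; rewrite inE.
by case: (P x).
Qed.

Theorem mainTheorem7 (R : realType) (k n : nat) (hk : (0 < k)%N) (hn : (0 < n)%N)
    (f : 'I_k.+1 -> 'I_k.+1 -> 'I_k.+1 -> R[i])
    (z1 z0 zm1 : 'I_n -> bool) :
  clause_exp (fun sigma : clause n k =>
      f (inord (clause_sum z1 sigma)) (inord (clause_sum z0 sigma))
        (inord (clause_sum zm1 sigma)))
  = (2 ^ k)%N%:R^-1 *
    \sum_(kk : {ffun cfg -> 'I_k.+1} | (\sum_(s : cfg) kk s)%N == k)
      ((k`!)%:R / (\prod_(s : cfg) (kk s)`!)%:R) *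
      (\prod_(s : cfg)
          (((basis_num z1 z0 zm1 s + basis_num z1 z0 zm1 (cfgC s))%N%:R / n%:R)
             ^+ kk s)) *
      f (inord (\sum_(s : cfg | cfg1 s) kk s)%N)
        (inord (\sum_(s : cfg | cfg0 s) kk s)%N)
        (inord (\sum_(s : cfg | cfgm1 s) kk s)%N).
Proof.
pose cc (p : 'I_n * bool) : cfg := ((z1 p.1 (+) p.2, z0 p.1 (+) p.2), zm1 p.1 (+) p.2).
pose G (m : cfg -> nat) := f (inord (\sum_(s : cfg | cfg1 s) m s)%N)
        (inord (\sum_(s : cfg | cfg0 s) m s)%N)
        (inord (\sum_(s : cfg | cfgm1 s) m s)%N).
have HG : forall m1 m2, m1 =1 m2 -> G m1 = G m2.
  by move=> m1 m2 e; rewrite /G !(eq_bigr _ (fun s _ => e s)).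
have NcE s : Nc cc s = (basis_num z1 z0 zm1 s + basis_num z1 z0 zm1 (cfgC s))%N.
  rewrite /Nc /basis_num !card_sum.
  rewrite [X in X = _](_ : _ = \sum_l \sum_b (cc (l,b) == s : nat))%N; last first.
    by rewrite pair_bigA; apply: eq_bigr => -[].
  rewrite addnC -big_split /=.
  apply: eq_bigr => l _; rewrite big_bool /cc /= !addbT !addbF addnC.
  by case: s => [[a b] d]; case: (z1 l); case: (z0 l); case: (zm1 l);
     case: a; case: b; case: d.
rewrite /clause_exp.
rewrite (eq_bigr (fun g => G (fun s => cntc cc g s))); last first.
  by move=> g _; rewrite /G -!cnt_pred.
rewrite group_sum // !big_distrr /=; apply: eq_bigr => kk /eqP Hk.
have HB := Bc_mult cc Hk.
have HB' : (Bc cc k (fun s => kk s))%:R =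
   (k`!)%:R * (\prod_s (Nc cc s ^ kk s)%N)%:R / (\prod_s (kk s)`!)%:R :> R[i].
  have nz : (\prod_s (kk s)`!)%:R != 0 :> R[i].
    by rewrite pnatr_eq0 -lt0n prodn_gt0 // => s; exact: fact_gt0.
  by apply: (mulIf nz); rewrite divfK // -!natrM HB.
rewrite HB'.
rewrite (eq_bigr (fun s => (Nc cc s)%:R ^+ kk s * (n%:R^-1) ^+ kk s)); last first.
  by move=> s _; rewrite -NcE exprMn.
rewrite big_split /= prodrXr Hk natr_prod.
rewrite (eq_bigr (fun s => (Nc cc s)%:R ^+ kk s)); last by move=> s _; rewrite natrX.
rewrite /G.
set P := \prod_s _; set F := f _ _ _; set Q := (\prod_s _)%:R.
have nz : (\prod_s (kk s)`!)%:R != 0 :> R[i].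
  by rewrite pnatr_eq0 -lt0n prodn_gt0 // => s; exact: fact_gt0.
have n0 : n%:R != 0 :> R[i] by rewrite pnatr_eq0 -lt0n.
have t0 : 2%:R != 0 :> R[i] by rewrite pnatr_eq0.
rewrite !natrX natrM exprMn exprVn.
field.
by rewrite nz !expf_neq0.
Qed.
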